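(* Fix any quantile vector $\mathbf{q}=(q_1\ge\dots\ge q_N)$ with $q_i\in(0,1)$. Then $\mathrm{STR}(\mathbf{q},\pi)\ge\mathrm{OPT}(\mathbf{q},\pi)$ for every $\pi\in\Pi_{n,m,c}\setminus\mathcal{E}_2$.
   Context: Setting: distributions $F_B,F_S$ with quantile functions $b(q)=\inf\{x:\Pr_{b\sim F_B}[b\le x]\ge q\}$, $s(q)=\inf\{x:\Pr_{s\sim F_S}[s\le x]\ge q\}$, and $b(q)\ge s(q)$ for all $q\in(0,1)$ ($F_B$ first-order stochastically dominates $F_S$). Integers $m\ge n\ge 20$ and $c\ge1$; $N=m+n+2c$. $\Pi_{n,m,c}$ is the set of maps $\pi:[N]\to\{\mathrm{BO},\mathrm{BN},\mathrm{SO},\mathrm{SN}\}$ with $m$, $c$, $n$, $c$ preimages respectively of $\mathrm{BO},\mathrm{BN},\mathrm{SO},\mathrm{SN}$; write $B_{\mathrm{Old}}^\pi,B_{\mathrm{New}}^\pi,S_{\mathrm{Old}}^\pi,S_{\mathrm{New}}^\pi$ for these preimages. Index $i$ labeled as buyer gives a buyer with value $b(q_i)$, labeled as seller gives a seller with value $s(q_i)$; the original market consists of old buyers and old sellers, the augmented market of all agents. $\mathrm{OPT}(\mathbf{q},\pi)$ is the first-best gains from trade in the original market; $\mathrm{STR}(\mathbf{q},\pi)$ is the gains from trade of Seller Trade Reduction in the augmented market. (First best: with buyer values $b^{(1)}\ge\dots$, seller values $s^{(1)}\le\dots$, $r=\max\{i: b^{(i)}\ge s^{(i)}\}$ ($0$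 if none), trade top $r$ buyers with bottom $r$ sellers, gains $\sum_{i\le r}(b^{(i)}-s^{(i)})$. STR: with $s^{(k)}=\infty$ beyond the number of sellers, if $b^{(r)}\ge s^{(r+1)}$ trade $r$ pairs, else only the top $r-1$ buyers with bottom $r-1$ sellers.) Let $p=\lceil n/10\rceil$, $I_1=\{1,\dots,p\}$, $I_2=\{p+1,\dots,2p\}$, $J_1=\{N-p+1,\dots,N\}$, $J_2=\{N-2p+1,\dots,N-p\}$. $\mathcal{E}_1$ is the set of $\pi$ with $|I_1\cap B_{\mathrm{New}}^\pi|\ge2$, $|I_2\cap B_{\mathrm{Old}}^\pi|\ge1$, $|J_1\cap S_{\mathrm{New}}^\pi|\ge2$, $|J_2\cap S_{\mathrm{Old}}^\pi|\ge1$. $\mathcal{E}_2=\{\pi\in\Pi_{n,m,c}:\pi\notin\mathcal{E}_1,\ S_{\mathrm{New}}^\pi\subseteq\{1,\dots,2n+2c\}\}$. *)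

(* Defs.v *)
From HB Require Import structures.
From mathcomp Require Import all_boot all_order all_algebra.
From mathcomp Require Import all_classical all_reals all_analysis.
Set Implicit Arguments. Unset Strict Implicit. Unset Printing Implicit Defensive.
Import Order.TTheory GRing.Theory Num.Theory.
Local Open Scope classical_set_scope.
Local Open Scope ring_scope.

Definition quantile (R : realType) (P : probability R R) (q : R) : R :=
  inf [set x : R | (q%:E <= P [set` `]-oo, x]])%E].

(** Agent labels: old buyer, new buyer, old seller, new seller. *)
Inductive label := BO | BN | SO | SN.

Definition label_eqb (a b : label) : bool :=
  match a, b with
  | BO, BO | BN, BN | SO, SO | SN, SN => true
  | _, _ => false
  end.

Lemma label_eqP : Equality.axiom label_eqb.
Proof. by case; case; constructor. Qed.

HB.instance Definition _ := hasDecEq.Build label label_eqP.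

(** The set Pi_{n,m,c}: labellings of [N] = 'I_(m+n+2c) (index i+1 in the
    paper is the ordinal i here) with m, c, n, c preimages of BO, BN, SO, SN. *)
Definition in_Pi (m n c : nat) (pi : {ffun 'I_(m + n + 2 * c) -> label}) : Prop :=
  [/\ #|[set i | pi i == BO]| = m, #|[set i | pi i == BN]| = c,
      #|[set i | pi i == SO]| = n & #|[set i | pi i == SN]| = c].

Definition pp (n : nat) : nat := (n + 9) %/ 10.

(** The event E_1 (1-based indices of the paper shifted down by one). *)
Definition in_E1 (m n c : nat) (pi : {ffun 'I_(m + n + 2 * c) -> label}) : Prop :=
  let N := m + n + 2 * c in
  let p := pp n in
  [/\ 2 <= #|[set i : 'I_N | (i < p)%N && (pi i == BN)]|,
      1 <= #|[set i : 'I_N | [&& (p <= i)%N, (i < 2 * p)%N & pi i == BO]]|,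
      2 <= #|[set i : 'I_N | (N - p <= i)%N && (pi i == SN)]|
    & 1 <= #|[set i : 'I_N | [&& (N - 2 * p <= i)%N, (i < N - p)%N & pi i == SO]]|]%N.

(** The event E_2: not in E_1, and every new seller has (1-based) index
    at most 2n+2c. *)
Definition in_E2 (m n c : nat) (pi : {ffun 'I_(m + n + 2 * c) -> label}) : Prop :=
  in_Pi pi /\ ~ in_E1 pi /\
  (forall i : 'I_(m + n + 2 * c), pi i = SN -> (i < 2 * n + 2 * c)%N).

Section Market.
Variable R : realType.

Definition sort_desc (s : seq R) : seq R := sort (fun x y => y <= x) s.
Definition sort_asc (s : seq R) : seq R := sort (fun x y => x <= y) s.

(** r = max { i : b^(i) >= s^(i) } (0 if none), i ranging over indices
    where both exist; bs and ss are 0-indexed (bs`_i = b^(i+1)). *)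
Definition fb_r (bs ss : seq R) : nat :=
  \max_(i < minn (size bs) (size ss) | ss`_i <= bs`_i) i.+1.

Definition gains (bs ss : seq R) (k : nat) : R :=
  \sum_(i < k) (bs`_i - ss`_i).

Definition first_best (bs ss : seq R) : R := gains bs ss (fb_r bs ss).

(** Seller Trade Reduction: with s^(k) = +oo beyond the number of sellers,
    trade r pairs if b^(r) >= s^(r+1), else r-1 pairs. *)
Definition str_trades (bs ss : seq R) : nat :=
  let r := fb_r bs ss in
  if (r < size ss)%N && (ss`_r <= bs`_(r.-1)) then r else r.-1.

Definition str_gains (bs ss : seq R) : R := gains bs ss (str_trades bs ss).

End Market.

Section Instance.
Variables (R : realType) (FB FS : probability R R) (m n c : nat).
Let N := (m + n + 2 * c)%N.
Variables (q : 'I_N -> R) (pi : {ffun 'I_N -> label}).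

Definition values_of (F : probability R R) (P : label -> bool) : seq R :=
  [seq quantile F (q i) | i <- enum 'I_N & P (pi i)].

Definition OPT : R :=
  first_best (sort_desc (values_of FB (fun l => l == BO)))
             (sort_asc (values_of FS (fun l => l == SO))).

Definition STR : R :=
  str_gains (sort_desc (values_of FB (fun l => (l == BO) || (l == BN))))
            (sort_asc (values_of FS (fun l => (l == SO) || (l == SN)))).

End Instance.

(* Main.v *)
Require Import Defs.
From HB Require Import structures.
From mathcomp Require Import all_boot all_order all_algebra.
From mathcomp Require Import all_classical all_reals all_analysis.
Import Order.TTheory GRing.Theory Num.Theory numFieldNormedType.Exports.
Local Open Scope ring_scope.

From mathcomp Require Import zify.
Section QM.
Context {R : realType} (F : probability R R).
Local Open Scope classical_set_scope.

Let idTR : R -> R := idfun.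
#[local] HB.instance Definition _ :=
  @isMeasurableFun.Build _ _ _ _ idTR (@measurable_id _ _ setT).

Let fcdf r := fine (cdf (idTR : {RV F >-> R}) r).

Let fcdfE r : (fcdf r)%:E = F `]-oo, r].
Proof. by rewrite /fcdf fineK ?fin_num_measure //= preimage_id. Qed.

Let fcdf_Ny0 : fcdf @ -oo --> (0:R).
Proof. exact/fine_cvg/cvg_cdfNy0. Qed.

Let fcdf_y1 : fcdf @ +oo --> (1:R).
Proof. exact/fine_cvg/cvg_cdfy1. Qed.

Lemma quantile_mono x y : 0 < x -> y < 1 -> x <= y -> quantile F x <= quantile F y.
Proof.
move=> x0 y1 xy.
have [M [_ HM]] := cvgr_gt _ fcdf_y1 _ y1.
have [M' [_ HM']] := cvgr_lt _ fcdf_Ny0 _ x0.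
rewrite /quantile.
apply: lb_le_inf.
  exists (M + 1) => /=; rewrite -fcdfE lee_fin; apply/ltW/HM; rewrite ltrDl //.
move=> z /= Hz; apply: ge_inf.
  exists (M' - 1) => w /= Hw; rewrite leNgt; apply/negP => wM.
  have := HM' w; rewrite -fcdfE lee_fin in Hw.
  have wM' : w < M' by rewrite (lt_le_trans wM) // gerDl lerN10.
  by move=> /(_ wM'); rewrite ltNge Hw.
by rewrite /=; apply: le_trans Hz; rewrite lee_fin.
Qed.
End QM.
Section SeqLemmas.
Context {R : realType}.
Implicit Types (s : seq R).

Definition geR := fun x y : R => y <= x.
Definition leR := fun x y : R => x <= y.

Lemma geR_total : total geR. Proof. by move=> x y; rewrite /geR le_total. Qed.
Lemma leR_total : total leR. Proof. by move=> x y; rewrite /leR le_total. Qed.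
Lemma geR_trans : transitive geR. Proof. by move=> x y z; rewrite /geR => h1 h2; apply: le_trans h2 h1. Qed.
Lemma leR_trans : transitive leR. Proof. by move=> x y z; rewrite /leR; apply: le_trans. Qed.
Lemma geR_refl : reflexive geR. Proof. by move=> x; rewrite /geR. Qed.
Lemma leR_refl : reflexive leR. Proof. by move=> x; rewrite /leR. Qed.

Lemma desc_nth s i j : sorted geR s -> (i <= j)%N -> (j < size s)%N -> s`_j <= s`_i.
Proof.
move=> ss ij js; have := @sorted_leq_nth _ geR geR_trans geR_refl 0 s ss i j.
by apply => //; rewrite inE (leq_ltn_trans ij js).
Qed.

Lemma asc_nth s i j : sorted leR s -> (i <= j)%N -> (j < size s)%N -> s`_i <= s`_j.
Proof.
move=> ss ij js; have := @sorted_leq_nth _ leR leR_trans leR_refl 0 s ss i j.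
by apply => //; rewrite inE (leq_ltn_trans ij js).
Qed.

Lemma desc_count (P : pred R) s k :
  (forall x y, x <= y -> P x -> P y) -> sorted geR s ->
  (k < count P s)%N -> P s`_k.
Proof.
move=> Pup ss kc; apply/negPn/negP => nP.
have ks : (k < size s)%N by apply: leq_trans kc (count_size _ _).
have : count P (drop k s) = 0%N.
  apply/eqP; rewrite -leqn0 leqNgt -has_count; apply/hasP => -[y yd Py].
  move: yd; rewrite (drop_nth 0 ks) inE => /orP[/eqP yE|yd]; first by rewrite -yE Py in nP.
  have : all (geR s`_k) (drop k.+1 s).
    apply: order_path_min; first exact: geR_trans.
    by move: (ss); rewrite -[s in sorted _ s](cat_take_drop k) (drop_nth 0 ks) => /cat_sorted2[].
  by move/allP/(_ _ yd); rewrite /geR => /Pup /(_ Py); rewrite (negbTE nP).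
move=> c0; move: kc; rewrite -[s in count _ s](cat_take_drop k) count_cat c0.
rewrite addn0 => /leq_trans/(_ (count_size _ _)); rewrite size_take ks ltnn //.
Qed.

Lemma asc_count (P : pred R) s k :
  (forall x y, y <= x -> P x -> P y) -> sorted leR s ->
  (k < count P s)%N -> P s`_k.
Proof.
move=> Pup ss kc; apply/negPn/negP => nP.
have ks : (k < size s)%N by apply: leq_trans kc (count_size _ _).
have : count P (drop k s) = 0%N.
  apply/eqP; rewrite -leqn0 leqNgt -has_count; apply/hasP => -[y yd Py].
  move: yd; rewrite (drop_nth 0 ks) inE => /orP[/eqP yE|yd]; first by rewrite -yE Py in nP.
  have : all (leR s`_k) (drop k.+1 s).
    apply: order_path_min; first exact: leR_trans.
    by move: (ss); rewrite -[s in sorted _ s](cat_take_drop k) (drop_nth 0 ks) => /cat_sorted2[].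
  by move/allP/(_ _ yd); rewrite /leR => /Pup /(_ Py); rewrite (negbTE nP).
move=> c0; move: kc; rewrite -[s in count _ s](cat_take_drop k) count_cat c0.
rewrite addn0 => /leq_trans/(_ (count_size _ _)); rewrite size_take ks ltnn //.
Qed.

Lemma desc_count_ge s i : sorted geR s -> (i < size s)%N ->
  (i < count (fun y => (s`_i <= y)%R) s)%N.
Proof.
move=> ss iS; rewrite -[s in count _ s](cat_take_drop i.+1) count_cat.
apply: leq_trans (leq_addr _ _).
have -> : count (fun y => s`_i <= y) (take i.+1 s) = size (take i.+1 s).
  apply/eqP; rewrite -all_count; apply/(all_nthP 0) => k.
  rewrite size_takel // => ki; rewrite nth_take //; exact: desc_nth.
by rewrite size_takel.
Qed.

Lemma asc_count_le s i : sorted leR s -> (i < size s)%N ->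
  (i < count (fun y => (y <= s`_i)%R) s)%N.
Proof.
move=> ss iS; rewrite -[s in count _ s](cat_take_drop i.+1) count_cat.
apply: leq_trans (leq_addr _ _).
have -> : count (fun y => y <= s`_i) (take i.+1 s) = size (take i.+1 s).
  apply/eqP; rewrite -all_count; apply/(all_nthP 0) => k.
  rewrite size_takel // => ki; rewrite nth_take //; exact: asc_nth.
by rewrite size_takel.
Qed.

End SeqLemmas.
Section Core.
Context {R : realType}.
Implicit Types (bs ss : seq R).

Lemma fb_r_le bs ss : (fb_r bs ss <= minn (size bs) (size ss))%N.
Proof. by apply/bigmax_leqP => i _; exact: ltn_ord. Qed.

Lemma fb_r_ge bs ss i : (i < minn (size bs) (size ss))%N -> ss`_i <= bs`_i ->
  (i.+1 <= fb_r bs ss)%N.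
Proof. by move=> im le; exact: (leq_bigmax_cond (Ordinal im)). Qed.

Lemma fb_r_spec bs ss : (0 < fb_r bs ss)%N ->
  ss`_(fb_r bs ss).-1 <= bs`_(fb_r bs ss).-1 /\ ((fb_r bs ss).-1 < minn (size bs) (size ss))%N.
Proof.
rewrite /fb_r; case: (pickP (fun i : 'I_(minn (size bs) (size ss)) => ss`_i <= bs`_i)) => [i0 P0|P0].
  rewrite (bigop.bigmax_eq_arg i0) //; case: arg_maxnP => //= i Pi _ _; by rewrite ltn_ord.
by rewrite big_pred0.
Qed.

End Core.

Section Core2.
Context {R : realType}.
Implicit Types (bs ss : seq R).

Lemma gains_mono bs ss k1 k2 : (k1 <= k2)%N ->
  (forall i, (k1 <= i < k2)%N -> ss`_i <= bs`_i) -> gains bs ss k1 <= gains bs ss k2.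
Proof.
move=> k12 H; rewrite /gains -!(big_mkord xpredT (fun i => bs`_i - ss`_i)).
rewrite (big_cat_nat (leq0n k1) k12) /= lerDl.
rewrite big_nat_cond; apply: sumr_ge0 => i /andP[/H + _]; by rewrite subr_ge0.
Qed.

Lemma core (B S B' S' : seq R) :
  sorted geR B -> sorted geR B' -> sorted leR S -> sorted leR S' ->
  (forall i, (i < size B)%N -> B`_i <= B'`_i) ->
  (forall i, (i < size S)%N -> S'`_i <= S`_i) ->
  (size B <= size B')%N -> (size S < size S')%N ->
  ((0 < fb_r B S)%N -> S'`_(fb_r B S) <= B'`_((fb_r B S).-1)) ->
  first_best B S <= str_gains B' S'.
Proof.
move=> sB sB' sS sS' dB dS zB zS key.
rewrite /first_best /str_gains.
set r := fb_r B S; set r' := fb_r B' S'.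
have rle : (r <= minn (size B) (size S))%N := fb_r_le B S.
have rr' : (r <= r')%N.
  case: (posnP r) => [->//|r0].
  have [Hs Hm] := fb_r_spec _ _ r0.
  rewrite -(prednK r0); apply: fb_r_ge.
    by move: Hm; rewrite !leq_min => /andP[h1 h2]; rewrite (leq_trans h1 zB) (leq_trans h2 (ltnW zS)).
  move: Hm; rewrite leq_min => /andP[h1 h2].
  by apply: le_trans (dS _ h2) _; apply: le_trans Hs (dB _ h1).
have pos : forall i, (i < r')%N -> S'`_i <= B'`_i.
  move=> i ir; have r0 : (0 < r')%N by apply: leq_ltn_trans ir.
  have [Hs Hm] := fb_r_spec _ _ r0.
  move: Hm; rewrite leq_min => /andP[h1 h2].
  have ii : (i <= r'.-1)%N by rewrite -ltnS prednK.
  have a1 := asc_nth _ _ _ sS' ii h2; have a2 := desc_nth _ _ _ sB' ii h1.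
  by apply: le_trans a1 _; apply: le_trans Hs _.
have str_le : (str_trades B' S' <= r')%N.
  by rewrite /str_trades -/r'; case: ifP => // _; exact: leq_pred.
have str_ge : (r <= str_trades B' S')%N.
  rewrite /str_trades -/r'.
  case: (ltngtP r r') rr' => // [lt _|eq _].
    by case: ifP => // _; [exact: ltnW | rewrite -ltnS prednK // (leq_ltn_trans _ lt)].
  case: (posnP r) => [->//|r0].
  rewrite -eq ifT //; apply/andP; split.
    by apply: leq_ltn_trans zS; apply: leq_trans rle (geq_minr _ _).
  exact: key.
have G2 : gains B' S' r <= gains B' S' (str_trades B' S').
  by apply: gains_mono => // i /andP[_ h]; apply: pos; exact: leq_trans h str_le.
apply: le_trans G2.
rewrite /gains; apply: ler_sum => i _.
have hi : (i < minn (size B) (size S))%N by apply: leq_trans rle.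
move: hi; rewrite leq_min => /andP[h1 h2].
by apply: lerB; [exact: dB | exact: dS].
Qed.

End Core2.
Lemma cnt_card N (P : pred 'I_N) : #|[set i | P i]| = count P (enum 'I_N).
Proof. by rewrite enumT cardsE cardE /enum_mem size_filter. Qed.

Lemma cnt_le N (j : nat) : (j < N)%N -> count (fun i : 'I_N => (i <= j)%N) (enum 'I_N) = j.+1.
Proof.
move=> jN; rewrite -(count_map val (fun k => k <= j)%N) val_enum_ord.
rewrite -(subnKC jN) iotaD count_cat add0n.
rewrite (eq_in_count (a2 := predT)); last by move=> k; rewrite mem_iota.
rewrite count_predT size_iota (eq_in_count (a2 := pred0)); last first.
  by move=> k; rewrite mem_iota /= => /andP[h _]; apply/negbTE; rewrite -ltnNge.
by rewrite count_pred0 addn0.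
Qed.

Lemma cnt_gt N (j : nat) : (j < N)%N -> count (fun i : 'I_N => (j < i)%N) (enum 'I_N) = (N - j.+1)%N.
Proof.
move=> jN; have := count_predC (fun i : 'I_N => (i <= j)%N) (enum 'I_N).
rewrite size_enum_ord cnt_le // => h.
rewrite (eq_count (a2 := predC (fun i : 'I_N => (i <= j)%N))); first lia.
by move=> i /=; rewrite ltnNge.
Qed.

Lemma count_split {T : Type} (a b : pred T) s :
  count a s = (count (fun x => a x && b x) s + count (fun x => a x && ~~ b x) s)%N.
Proof.
rewrite -size_filter -(count_predC b) !count_filter; congr (_ + _)%N; apply: eq_count => x /=; by rewrite andbC.
Qed.

Lemma count_plus1 N (a Q : pred 'I_N) (j : 'I_N) : Q j -> ~~ a j -> (forall i, a i -> Q i) ->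
  ((count a (enum 'I_N)).+1 <= count Q (enum 'I_N))%N.
Proof.
move=> Qj naj aQ.
have := count_predUI a (pred1 j) (enum 'I_N).
rewrite (eq_count (a1 := predI a (pred1 j)) (a2 := pred0)); last first.
  by move=> i /=; apply/andP => -[ai /eqP ij]; move: naj; rewrite -ij ai.
rewrite count_pred0 addn0 (count_uniq_mem _ (enum_uniq _)) mem_enum addn1 => <-.
by apply: sub_count => i /= /orP[/aQ //|/eqP ->].
Qed.

Lemma count_sort {R : realType} (leT : rel R) (s0 : seq R) (Q : pred R) :
  count Q (sort leT s0) = count Q s0.
Proof. exact: (permP (permEl (perm_sort leT s0))). Qed.

Section CS.
Local Open Scope classical_set_scope.
Lemma mem2 N (P : pred 'I_N) i : (i \in [set i | P i]) = P i.
Proof. by apply/idP/idP; rewrite in_setE. Qed.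
Lemma cnt_card2 N (P : pred 'I_N) : #|[set i | P i]| = count P (enum 'I_N).
Proof. rewrite enumT cardE /enum_mem size_filter; apply: eq_count => i /=. exact: mem2. Qed.
End CS.

Section Comb.
Context {R : realType} (N m n c : nat) (b s : 'I_N -> R) (pi : {ffun 'I_N -> label}).

Definition vals (f : 'I_N -> R) (P : label -> bool) := [seq f i | i <- enum 'I_N & P (pi i)].

Lemma count_vals f P Q : count Q (vals f P) = count (fun i => P (pi i) && Q (f i)) (enum 'I_N).
Proof. by rewrite count_map count_filter; apply: eq_count => i /=; rewrite andbC. Qed.

Lemma size_vals f P : size (vals f P) = count (fun i => P (pi i)) (enum 'I_N).
Proof. by rewrite size_map size_filter. Qed.

End Comb.

Section Comb2.
Context {R : realType} (N m n c : nat) (b s : 'I_N -> R) (pi : {ffun 'I_N -> label}).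
Hypothesis hb : forall i j : 'I_N, (i <= j)%N -> b j <= b i.
Hypothesis hs : forall i j : 'I_N, (i <= j)%N -> s j <= s i.
Hypothesis hd : forall i, s i <= b i.
Hypothesis cBO : count (fun i => pi i == BO) (enum 'I_N) = m.
Hypothesis cSO : count (fun i => pi i == SO) (enum 'I_N) = n.
Hypothesis hN : N = (m + n + 2 * c)%N.
Hypothesis hnm : (n <= m)%N.
Hypothesis hj : exists j : 'I_N, pi j = SN /\ ((N - pp n <= j)%N \/ (2 * n + 2 * c <= j)%N).

Let B := sort_desc (vals _ pi b (fun l => l == BO)).
Let S := sort_asc (vals _ pi s (fun l => l == SO)).
Let B' := sort_desc (vals _ pi b (fun l => (l == BO) || (l == BN))).
Let S' := sort_asc (vals _ pi s (fun l => (l == SO) || (l == SN))).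

Lemma comb : first_best B S <= str_gains B' S'.
Proof.
have sB : sorted geR B by exact: sort_sorted geR_total _.
have sB' : sorted geR B' by exact: sort_sorted geR_total _.
have sS : sorted leR S by exact: sort_sorted leR_total _.
have sS' : sorted leR S' by exact: sort_sorted leR_total _.
have [j [pj hjj]] := hj.
have zB : size B = m by rewrite /B /sort_desc size_sort size_vals.
have zS : size S = n by rewrite /S /sort_asc size_sort size_vals.
have cntB P : count P B = count (fun i => (pi i == BO) && P (b i)) (enum 'I_N).
  by rewrite /B /sort_desc count_sort count_vals.
have cntB' P : count P B' = count (fun i => ((pi i == BO) || (pi i == BN)) && P (b i)) (enum 'I_N).
  by rewrite /B' /sort_desc count_sort count_vals.
have cntS P : count P S = count (fun i => (pi i == SO) && P (s i)) (enum 'I_N).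
  by rewrite /S /sort_asc count_sort count_vals.
have cntS' P : count P S' = count (fun i => ((pi i == SO) || (pi i == SN)) && P (s i)) (enum 'I_N).
  by rewrite /S' /sort_asc count_sort count_vals.
have zB' : (size B <= size B')%N.
  rewrite -!(count_predT) cntB cntB'; apply: sub_count => i /=.
  by rewrite !andbT => ->.
have zS' : (size S < size S')%N.
  rewrite -!(count_predT) cntS cntS'; apply: (@count_plus1 _ _ _ j) => /=.
  - by rewrite pj orbT.
  - by rewrite pj.
  - by move=> i; rewrite !andbT => ->.
have dB : forall i, (i < size B)%N -> B`_i <= B'`_i.
  move=> i iB; apply: (@desc_count _ (fun y => B`_i <= y)) => //.
    by move=> x y xy h; apply: le_trans h xy.
  rewrite cntB'; apply: leq_trans (desc_count_ge _ _ sB iB) _.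
  rewrite cntB; apply: sub_count => k /= /andP[-> ->]; done.
have dS : forall i, (i < size S)%N -> S'`_i <= S`_i.
  move=> i iS; apply: (@asc_count _ (fun y => y <= S`_i)) => //.
    by move=> x y xy h; apply: le_trans xy h.
  rewrite cntS'; apply: leq_trans (asc_count_le _ _ sS iS) _.
  rewrite cntS; apply: sub_count => k /= /andP[-> ->]; done.
apply: core => //.
set r := fb_r B S => r0.
have [Hs Hm] := fb_r_spec _ _ r0.
rewrite -/r in Hs Hm.
move: Hm; rewrite leq_min zB zS => /andP[h1 h2].
set M := B`_r.-1.
have sj : s j <= M.
  rewrite leNgt; apply/negP => lt.
  have ca : (count (fun y => (M < y)%R) B <= r.-1)%N.
    rewrite leqNgt; apply/negP => h.
    have up : forall x y, x <= y -> M < x -> M < y.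
      by move=> x y xy h'; apply: lt_le_trans h' xy.
    by have := @desc_count _ (fun y => M < y) _ _ up sB h; rewrite ltxx.
  have cb : (count (fun i => (pi i == BO) && (i <= j)%N) (enum 'I_N) <= r.-1)%N.
    apply: leq_trans ca; rewrite cntB; apply: sub_count => i /= /andP[-> ij] /=.
    by apply: (lt_le_trans lt); apply: le_trans (hd j) _; apply: hb.
  have cc : (r <= count (fun i => (pi i == SO) && (j < i)%N) (enum 'I_N))%N.
    have h2' : (r.-1 < size S)%N by rewrite zS.
    have := asc_count_le _ _ sS h2'; rewrite (prednK r0) cntS => /leq_trans; apply.
    apply: sub_count => i /= /andP[-> si] /=; rewrite ltnNge; apply/negP => ij.
    have : s j <= S`_r.-1 by apply: le_trans (hs _ _ ij) si.
    by move/le_lt_trans => /(_ _ (le_lt_trans Hs lt)); rewrite ltxx.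
  have cBsplit := count_split (fun i => pi i == BO) (fun i : 'I_N => (i <= j)%N) (enum 'I_N).
  rewrite cBO in cBsplit.
  have c1 : (count (fun i => (pi i == BO) && ~~ (i <= j)%N) (enum 'I_N) <= N - j.+1)%N.
    rewrite -cnt_gt //; apply: sub_count => i /= /andP[_]; by rewrite ltnNge.
  have c2 : (count (fun i => (pi i == SO) && (j < i)%N) (enum 'I_N) <= N - j.+1)%N.
    rewrite -cnt_gt //; apply: sub_count => i /= /andP[_] //.
  have c3 : (j.+1 <= count (fun i => (pi i == BO) && (i <= j)%N) (enum 'I_N) + (N - m))%N.
    rewrite -(@cnt_le N j) // (count_split (fun i : 'I_N => (i <= j)%N) (fun i => pi i == BO)).
    apply: leq_add.
      by apply: eq_leq; apply: eq_count => i /=; rewrite andbC.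
    have := count_predC (fun i => pi i == BO) (enum 'I_N); rewrite size_enum_ord cBO => e.
    have -> : (N - m = count (predC (fun i => pi i == BO)) (enum 'I_N))%N by lia.
    by apply: sub_count => i /= /andP[].
  have hjN := ltn_ord j.
  rewrite /pp in hjj.
  lia.
have sM : S'`_r <= M.
  apply: (@asc_count _ (fun y => y <= M)) => //.
    by move=> x y xy h; apply: le_trans xy h.
  rewrite cntS'.
  have h2' : (r.-1 < size S)%N by rewrite zS.
  have := asc_count_le _ _ sS h2'; rewrite (prednK r0) cntS => h.
  apply: leq_trans (@count_plus1 _ (fun i => (pi i == SO) && (s i <= M)) _ j _ _ _) => /=.
  - apply: leq_trans h _; apply: sub_count => i /= /andP[-> si] /=; exact: le_trans si Hs.
  - by rewrite pj sj.
  - by rewrite pj.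
  - by move=> i /andP[-> ->].
apply: le_trans sM _; apply: dB; by rewrite zB.
Qed.

End Comb2.

Theorem lemma3p2 (R : realType) (FB FS : probability R R)
  (dom : forall x : R, 0 < x < 1 -> quantile FS x <= quantile FB x)
  (m n c : nat) (hn : (20 <= n)%N) (hnm : (n <= m)%N) (hc : (1 <= c)%N)
  (q : 'I_(m + n + 2 * c) -> R)
  (hq01 : forall i, 0 < q i < 1)
  (hqdec : forall i j : 'I_(m + n + 2 * c), (i <= j)%N -> q j <= q i)
  (pi : {ffun 'I_(m + n + 2 * c) -> label})
  (hpi : in_Pi pi) (hE2 : ~ in_E2 pi) :
  OPT FB FS q pi <= STR FB FS q pi.
Proof.
pose b := fun i => quantile FB (q i).
pose s := fun i => quantile FS (q i).
have hb : forall i j : 'I_(m + n + 2 * c), (i <= j)%N -> b j <= b i.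
  move=> i j ij; apply: quantile_mono (hqdec _ _ ij).
  - by case/andP: (hq01 j).
  - by case/andP: (hq01 i).
have hs : forall i j : 'I_(m + n + 2 * c), (i <= j)%N -> s j <= s i.
  move=> i j ij; apply: quantile_mono (hqdec _ _ ij).
  - by case/andP: (hq01 j).
  - by case/andP: (hq01 i).
have hd : forall i, s i <= b i by move=> i; apply: dom.
have hpi' := hpi.
case: hpi' => h1 h2 h3 h4.
rewrite cnt_card2 in h1; rewrite cnt_card2 in h3.
have hjE : exists j : 'I_(m + n + 2 * c), pi j = SN /\
   ((m + n + 2 * c - pp n <= j)%N \/ (2 * n + 2 * c <= j)%N).
  case: (pselect (in_E1 pi)) => [E1|nE1].
    case: E1 => _ _ e3 _.
    rewrite cnt_card2 in e3.
    have : has (fun i : 'I_(m + n + 2 * c) => (m + n + 2 * c - pp n <= i)%N && (pi i == SN)) (enum 'I_(m + n + 2 * c)).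
      by rewrite has_count; apply: leq_trans e3.
    case/hasP => j _ /andP[hj /eqP pj].
    by exists j; split => //; left.
  case: (pselect (exists j : 'I_(m + n + 2 * c), pi j = SN /\ (2 * n + 2 * c <= j)%N)) => [[j [pj hj]]|nj].
    by exists j; split => //; right.
  exfalso; apply: hE2; split => //; split => // i pii.
  rewrite ltnNge; apply/negP => h; apply: nj; exists i; split => //.
exact: (@comb R _ m n c b s pi hb hs hd h1 h3 erefl hnm hjE).
Qed.
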